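(* Let $G$ be a group with identity $e$, $A$ a finite set with $|A|\ge2$, $S\subseteq G$ finite with $e\in S$. Suppose $(\mathcal P,f)$ generates a local map $\mu:A^S\to A$ and $|\mathcal P|$ is not a multiple of $|A|$. Then every $s\in S\setminus\{e\}$ is essential for $\mu$.
   Context: $A^S$ is the set of functions $S\to A$. For $s\in S$, $\mathrm{Res}_s(z)=z|_{S\setminus\{s\}}$. An element $s\in S$ is essential for $\mu$ if there exist $z,w\in A^S$ with $\mathrm{Res}_s(z)=\mathrm{Res}_s(w)$ but $\mu(z)\neq\mu(w)$. The pair $(\mathcal P,f)$ generates $\mu$ if $\mathcal P=\{z\in A^S:\mu(z)\neq z(e)\}$ and $f:\mathcal P\to A$ is the restriction of $\mu$ to $\mathcal P$. *)

(* Defs.v *)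
From HB Require Import structures.
From mathcomp Require Import all_boot.
From mathcomp Require Import finmap.
Set Implicit Arguments. Unset Strict Implicit. Unset Printing Implicit Defensive.
Local Open Scope fset_scope.

Definition is_group (G : Type) (mul : G -> G -> G) (inv : G -> G) (e : G) : Prop :=
  (forall x y z, mul x (mul y z) = mul (mul x y) z) /\
  (forall x, mul e x = x) /\ (forall x, mul x e = x) /\
  (forall x, mul (inv x) x = e) /\ (forall x, mul x (inv x) = e).

Definition config (G : choiceType) (S : {fset G}) (A : finType) := {ffun S -> A}.

Definition Res (G : choiceType) (S : {fset G}) (A : finType) (s : S)
  (z : {ffun S -> A}) : {ffun {t : S | t != s} -> A} :=
  [ffun t => z (val t)].

Definition essential (G : choiceType) (S : {fset G}) (A : finType)
  (mu : {ffun S -> A} -> A) (s : S) : Prop :=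
  exists z w : {ffun S -> A}, Res s z = Res s w /\ mu z <> mu w.

Definition generates (G : choiceType) (S : {fset G}) (A : finType) (e : G)
  (eS : e \in S) (P : {set {ffun S -> A}}) (f : {z | z \in P} -> A)
  (mu : {ffun S -> A} -> A) : Prop :=
  P = [set z | mu z != z [` eS]] /\ (forall z : {z | z \in P}, f z = mu (val z)).
Arguments generates {G S A e} eS P f mu.
Arguments essential {G S A} mu s.

(* Main.v *)
Require Import Defs.
From HB Require Import structures.
From mathcomp Require Import all_boot.
From mathcomp Require Import finmap.
From Stdlib Require Import Classical.
Local Open Scope fset_scope.

Theorem mainTheorem3 (G : choiceType) (mul : G -> G -> G) (inv : G -> G) (e : G)
  (hG : is_group mul inv e)
  (A : finType) (hA : 2 <= #|A|)
  (S : {fset G}) (eS : e \in S)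
  (mu : {ffun S -> A} -> A)
  (P : {set {ffun S -> A}}) (f : {z | z \in P} -> A)
  (hgen : generates eS P f mu)
  (hP : ~~ (#|A| %| #|P|)) :
  forall s : S, val s != e -> essential mu s.
Proof.
move=> s hs; apply: NNPP => hne.
have hmu : forall z w, Res s z = Res s w -> mu z = mu w.
  move=> z w hzw; apply: NNPP => hn; apply: hne; by exists z, w.
case: hgen => hPdef _.
pose upd (z : {ffun S -> A}) (a : A) : {ffun S -> A} :=
  [ffun t => if t == s then a else z t].
have es : [` eS] != s.
  apply/eqP => h; move: hs; by rewrite -h /= eqxx.
have hres : forall z a, Res s (upd z a) = Res s z.
  move=> z a; apply/ffunP => t; rewrite !ffunE (negbTE (valP t)) //.
have hmem : forall z a, (upd z a \in P) = (z \in P).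
  move=> z a; rewrite hPdef !inE (hmu _ _ (hres z a)) ffunE (negbTE es) //.
have [a0 _] : exists a0 : A, true.
  have : 0 < #|A| by apply: leq_trans hA.
  by case/card_gt0P => x _; exists x.
pose Q := [set z in P | z s == a0].
pose g (p : {ffun S -> A} * A) := upd p.1 p.2.
have himg : P = g @: setX Q [set: A].
  apply/setP => z; apply/idP/idP.
  - move=> zP; apply/imsetP; exists (upd z a0, z s).
      by rewrite !inE hmem zP /= ffunE !eqxx.
    apply/ffunP => t; rewrite /g /= !ffunE; case: eqP => [->|] //; rewrite ?ffunE ?eqxx //.
  - case/imsetP => [[z' a]]; rewrite !inE => /andP [/andP [zP _] _] ->.
    by rewrite /g /= hmem.
have hinj : {in setX Q [set: A] &, injective g}.
  move=> [z1 a1] [z2 a2]; rewrite !inE => /andP [/andP [_ h1] _] /andP [/andP [_ h2] _].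
  rewrite /g /= => heq.
  have ha : a1 = a2.
    by move: (congr1 (fun F : {ffun S -> A} => F s) heq); rewrite !ffunE eqxx.
  congr pair => //; apply/ffunP => t.
  move: (congr1 (fun F : {ffun S -> A} => F t) heq); rewrite !ffunE.
  case: eqP => [-> _|] //; by rewrite (eqP h1) (eqP h2).
apply: (negP hP); rewrite himg (card_in_imset hinj) cardsX cardsT.
exact: dvdn_mull.
Qed.
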